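(* Let $G_r$ be a cactus request graph, i.e., a directed graph such that any two distinct cycles of its underlying undirected graph share at most a single node. Then $\mathrm{ew}_{\mathcal X}(G^{\mathcal X}_r)\le 2$ holds for every extraction order $G^{\mathcal X}_r$ of $G_r$.
   Context: An extraction order of a directed graph $G_r=(V_r,E_r)$ is a rooted directed acyclic graph $G^{\mathcal X}_r=(V_r,E^{\mathcal X}_r,s_r)$ in which every node is reachable from $s_r$ and $E^{\mathcal X}_r$ is obtained from $E_r$ by reversing some (possibly no) edges. A confluence from $i$ to $j$ is a pair of directed paths in $E^{\mathcal X}_r$ from $i$ to $j$ sharing no node other than $i,j$. For $e\in E^{\mathcal X}_r$, its label set $\mathcal L_e$ is the set of nodes $j$ such that $e$ lies on some confluence with target $j$. The outgoing edges of each node are partitioned into bags: classes of the equivalence relation generated by $e\sim e'$ iff $\mathcal L_e\cap\mathcal L_{e'}\neq\emptyset$; a bag's label set is $\mathcal L_B=\bigcup_{e\in B}\mathcal L_e$. The extraction width is $\mathrm{ew}_{\mathcal X}(G^{\mathcal X}_r)=1+\max|\mathcal L_B|$ over all bags of all nodes. *)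

(* Defs.v *)
From mathcomp Require Import all_boot.
From Stdlib Require Import ClassicalEpsilon.
Set Implicit Arguments. Unset Strict Implicit. Unset Printing Implicit Defensive.

Definition decP (P : Prop) : bool :=
  if excluded_middle_informative P then true else false.

Section ExtractionWidth.
Variables (V E : finType) (src tgt : E -> V).

(* An undirected traversal step: (e, false) traverses e from src to tgt,
   (e, true) traverses e from tgt to src. *)
Definition ufrom (eb : E * bool) : V := if eb.2 then tgt eb.1 else src eb.1.
Definition uto (eb : E * bool) : V := if eb.2 then src eb.1 else tgt eb.1.

Fixpoint uwalk (x : V) (c : seq (E * bool)) (y : V) : bool :=
  match c with
  | [::] => x == y
  | eb :: c' => (ufrom eb == x) && uwalk (uto eb) c' y
  end.

Definition ucycle (x : V) (c : seq (E * bool)) : bool :=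
  [&& c != [::], uwalk x c x, uniq (map fst c) & uniq (map uto c)].

Definition cycle_edges (c : seq (E * bool)) : {set E} := [set e | e \in map fst c].
Definition cycle_nodes (c : seq (E * bool)) : {set V} := [set v | v \in map uto c].

Definition cactus : Prop :=
  forall (x1 x2 : V) (c1 c2 : seq (E * bool)),
    ucycle x1 c1 -> ucycle x2 c2 -> cycle_edges c1 != cycle_edges c2 ->
    #|cycle_nodes c1 :&: cycle_nodes c2| <= 1.

(* An orientation [o] : o e = true means edge e is reversed. *)
Variable o : E -> bool.

Definition osrc (e : E) : V := if o e then tgt e else src e.
Definition otgt (e : E) : V := if o e then src e else tgt e.

Definition oadj : rel V := fun x y => [exists e, (osrc e == x) && (otgt e == y)].

(* G^X_r = (V, E^X, s) is a rooted DAG in which every node is reachable from s. *)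
Definition extraction_order (s : V) : Prop :=
  (forall e : E, ~~ connect oadj (otgt e) (osrc e)) /\
  (forall v : V, connect oadj s v).

Fixpoint dwalk (i : V) (p : seq E) (j : V) : bool :=
  match p with
  | [::] => i == j
  | e :: p' => (osrc e == i) && dwalk (otgt e) p' j
  end.

Definition dverts (i : V) (p : seq E) : seq V := i :: map otgt p.

Definition dpath (i : V) (p : seq E) (j : V) : bool :=
  dwalk i p j && uniq (dverts i p).

Definition confluence (i j : V) (p q : seq E) : Prop :=
  [/\ dpath i p j, dpath i q j, p != q &
      forall x, x \in dverts i p -> x \in dverts i q -> (x == i) || (x == j)].

Definition label (e : E) : {set V} :=
  [set j | decP (exists (i : V) (p q : seq E),
                   confluence i j p q /\ (e \in p \/ e \in q))].

(* Generating relation of bags: outgoing edges of the same node whose label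
   sets intersect; bags are the classes of its reflexive-transitive
   (symmetric) closure. *)
Definition bag_rel : rel E :=
  fun e e' => (osrc e == osrc e') && ~~ [disjoint label e & label e'].

Definition bag (e : E) : {set E} := [set e' | connect bag_rel e e'].

Definition bag_label (e : E) : {set V} := \bigcup_(e' in bag e) label e'.

Definition ew : nat := (\max_(e : E) #|bag_label e|).+1.

End ExtractionWidth.

(* Main.v *)
Require Import Defs.
From mathcomp Require Import all_boot.
From Stdlib Require Import ClassicalEpsilon.
Set Implicit Arguments. Unset Strict Implicit. Unset Printing Implicit Defensive.

Section Proof.
Variables (V E : finType) (src tgt : E -> V) (o : E -> bool).

Local Notation osrc := (osrc src tgt o).
Local Notation otgt := (otgt src tgt o).
Local Notation dwalk := (dwalk src tgt o).
Local Notation dverts := (dverts src tgt o).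
Local Notation uwalk := (uwalk src tgt).
Local Notation ufrom := (ufrom src tgt).
Local Notation uto := (uto src tgt).
Local Notation conf := (confluence src tgt o).

Definition fwd (e : E) : E * bool := (e, o e).
Definition bwd (e : E) : E * bool := (e, ~~ o e).

Lemma ufrom_fwd e : ufrom (fwd e) = osrc e.
Proof. by rewrite /ufrom /Defs.osrc /fwd /=; case: (o e). Qed.
Lemma uto_fwd e : uto (fwd e) = otgt e.
Proof. by rewrite /Defs.uto /Defs.otgt /fwd /=; case: (o e). Qed.
Lemma ufrom_bwd e : ufrom (bwd e) = otgt e.
Proof. by rewrite /ufrom /Defs.otgt /bwd /=; case: (o e). Qed.
Lemma uto_bwd e : uto (bwd e) = osrc e.
Proof. by rewrite /Defs.uto /Defs.osrc /bwd /=; case: (o e). Qed.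

Lemma uwalk_rcons x c eb y :
  uwalk x (rcons c eb) y = uwalk x c (ufrom eb) && (uto eb == y).
Proof.
elim: c x => [|eb' c IH] x /=; first by rewrite eq_sym.
by rewrite IH andbA.
Qed.

Lemma uwalk_fwd x p y : dwalk x p y -> forall c z, uwalk y c z -> uwalk x (map fwd p ++ c) z.
Proof.
elim: p x => [|e p IH] x /=; first by move/eqP->.
move=> /andP[/eqP hs hw] c z hc.
by rewrite ufrom_fwd hs eqxx /= uto_fwd; apply: IH.
Qed.

Lemma uwalk_bwd x q y : dwalk x q y -> uwalk y (map bwd (rev q)) x.
Proof.
elim: q x => [|e q IH] x /=; first by move/eqP->.
move=> /andP[/eqP hs hw].
by rewrite rev_cons map_rcons uwalk_rcons ufrom_bwd IH //= uto_bwd hs eqxx.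
Qed.

Lemma dverts_rcons i q j : dwalk i q j -> i :: map otgt q = rcons (map osrc q) j.
Proof.
elim: q i => [|e q IH] i /=; first by move/eqP->.
by move=> /andP[/eqP hs hw]; rewrite (IH _ hw) hs.
Qed.

Lemma dwalk_src_mem i p j e : dwalk i p j -> e \in p -> osrc e \in dverts i p.
Proof.
rewrite /Defs.dverts.
elim: p i => [|e' p IH] i //= /andP[/eqP hs hw].
rewrite in_cons => /orP[/eqP->| hp]; first by rewrite hs mem_head.
by rewrite in_cons (IH _ hw hp) orbT.
Qed.

Lemma dwalk_nil x p : dwalk x p x -> uniq (x :: map otgt p) -> p = [::].
Proof.
case: p => [|e p] // hw.
rewrite (dverts_rcons hw) rcons_uniq => /andP[hn _].
by move: hw => /= /andP[/eqP hs _]; rewrite /= hs mem_head in hn.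
Qed.

Lemma dwalk_single i p j e : dwalk i p j -> uniq (i :: map otgt p) ->
  e \in p -> osrc e = i -> otgt e = j -> p = [:: e].
Proof.
case: p => [|e' p] //= /andP[/eqP hs hw] hu.
rewrite in_cons => /orP[/eqP He | hp] h1 h2.
  subst e'; rewrite h2 in hw hu.
  case/andP: hu => _ hu.
  by rewrite (dwalk_nil hw hu).
have := dwalk_src_mem hw hp; rewrite /Defs.dverts h1 => hi.
by case/andP: hu => /negP.
Qed.

Lemma uniq_map_eq (T1 T2 : eqType) (f : T1 -> T2) s a b :
  uniq (map f s) -> a \in s -> b \in s -> f a = f b -> a = b.
Proof.
elim: s => [|x s IH] //= /andP[nx us].
rewrite !in_cons => /orP[/eqP->|ha] /orP[/eqP->|hb] //.
- by move=> hf; move: nx; rewrite hf map_f.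
- by move=> hf; move: nx; rewrite -hf map_f.
- exact: IH.
Qed.

Hypothesis Hdag : forall e, osrc e != otgt e.

Section Conf.
Variables (i j : V) (p q : seq E).
Hypothesis Hc : conf i j p q.

Lemma conf_sym : conf i j q p.
Proof.
case: Hc => h1 h2 h3 h4; split => //; first by rewrite eq_sym.
by move=> x a b; apply: h4.
Qed.

Lemma cwp : dwalk i p j. Proof. by case: Hc => /andP[]. Qed.
Lemma cup : uniq (i :: map otgt p). Proof. by case: Hc => /andP[]. Qed.
Lemma cwq : dwalk i q j. Proof. by case: Hc => _ /andP[]. Qed.
Lemma cuq : uniq (i :: map otgt q). Proof. by case: Hc => _ /andP[]. Qed.
Lemma cx x : x \in dverts i p -> x \in dverts i q -> x = i \/ x = j.
Proof. by case: Hc => _ _ _ h /h /[apply] /orP[]/eqP; [left|right]. Qed.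

Lemma conf_ij : i != j.
Proof.
apply/eqP => hij; case: Hc => _ _ hpq _.
move: cwp cup cwq cuq; rewrite -hij => w1 u1 w2 u2.
by rewrite (dwalk_nil w1 u1) (dwalk_nil w2 u2) in hpq.
Qed.

Lemma conf_i_notin : i \notin map otgt p.
Proof. by have := cup; rewrite cons_uniq => /andP[]. Qed.

Lemma conf_j_notin : j \notin map osrc p.
Proof. by have := cup; rewrite (dverts_rcons cwp) rcons_uniq => /andP[]. Qed.

Lemma conf_uosrc : uniq (map osrc p).
Proof. by have := cup; rewrite (dverts_rcons cwp) rcons_uniq => /andP[]. Qed.

Lemma conf_uotgt : uniq (map otgt p).
Proof. by have := cup; rewrite cons_uniq => /andP[]. Qed.

Lemma conf_mem_dv x : (x \in dverts i p) = (x == j) || (x \in map osrc p).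
Proof. by rewrite /Defs.dverts (dverts_rcons cwp) mem_rcons in_cons. Qed.

Lemma conf_j_in : j \in map otgt p.
Proof.
have : j \in dverts i p by rewrite conf_mem_dv eqxx.
rewrite /Defs.dverts in_cons => /orP[/eqP hj|//].
by move: conf_ij; rewrite hj eqxx.
Qed.

Lemma conf_i_in : i \in map osrc p.
Proof.
have : i \in dverts i p by rewrite /Defs.dverts mem_head.
rewrite conf_mem_dv => /orP[/eqP hj|//].
by move: conf_ij; rewrite hj eqxx.
Qed.

End Conf.

Section Conf2.
Variables (i j : V) (p q : seq E).
Hypothesis Hc : conf i j p q.

Lemma conf_edisj e : e \in p -> e \in q -> False.
Proof.
move=> ep eq.
have tp : otgt e \in map otgt p by rewrite map_f.
have tq : otgt e \in map otgt q by rewrite map_f.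
have sp := dwalk_src_mem (cwp Hc) ep.
have sq := dwalk_src_mem (cwq Hc) eq.
have ht : otgt e = j.
  case: (cx Hc (x := otgt e)); rewrite /Defs.dverts ?in_cons ?tp ?tq ?orbT // => hi.
  by move: (conf_i_notin Hc); rewrite -hi tp.
have hs : osrc e = i.
  case: (cx Hc sp sq) => // hj.
  by move: (Hdag e); rewrite hj ht eqxx.
have P1 := dwalk_single (cwp Hc) (cup Hc) ep hs ht.
have P2 := dwalk_single (cwq Hc) (cuq Hc) eq hs ht.
by case: Hc => _ _ /eqP; rewrite P1 P2.
Qed.

Definition cyc := map fwd p ++ map bwd (rev q).

Lemma map_fst_fwd s : map fst (map fwd s) = s.
Proof. by elim: s => //= x s ->. Qed.
Lemma map_fst_bwd s : map fst (map bwd s) = s.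
Proof. by elim: s => //= x s ->. Qed.
Lemma map_uto_fwd s : map uto (map fwd s) = map otgt s.
Proof. by elim: s => //= x s ->; rewrite uto_fwd. Qed.
Lemma map_uto_bwd s : map uto (map bwd s) = map osrc s.
Proof. by elim: s => //= x s ->; rewrite uto_bwd. Qed.

Lemma cyc_nodes v : (v \in cycle_nodes src tgt cyc) = (v \in map otgt p) || (v \in map osrc q).
Proof.
by rewrite /cycle_nodes inE /cyc map_cat map_uto_fwd map_uto_bwd map_rev mem_cat mem_rev.
Qed.

Lemma cyc_edges x : (x \in cycle_edges cyc) = (x \in p) || (x \in q).
Proof. by rewrite /cycle_edges inE /cyc map_cat map_fst_fwd map_fst_bwd mem_cat mem_rev. Qed.

Lemma cyc_ucycle : Defs.ucycle src tgt i cyc.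
Proof.
apply/and4P; split.
- have : p != [::].
    apply/eqP => hp; have := cwp Hc; rewrite hp /= => /eqP hij.
    by move: (conf_ij Hc); rewrite hij eqxx.
  by rewrite /cyc; case: (p).
- exact: uwalk_fwd (cwp Hc) _ _ (uwalk_bwd (cwq Hc)).
- rewrite /cyc map_cat map_fst_fwd map_fst_bwd cat_uniq rev_uniq.
  rewrite (map_uniq (conf_uotgt Hc)) (map_uniq (conf_uotgt (conf_sym Hc))) /= andbT.
  apply/hasPn => x; rewrite mem_rev => xq; apply/negP => xp.
  exact: conf_edisj xp xq.
- rewrite /cyc map_cat map_uto_fwd map_uto_bwd map_rev cat_uniq rev_uniq.
  rewrite (conf_uotgt Hc) (conf_uosrc (conf_sym Hc)) /= andbT.
  apply/hasPn => x; rewrite mem_rev => xq; apply/negP => xp.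
  have h1 : x \in dverts i p by rewrite /Defs.dverts in_cons xp orbT.
  have h2 : x \in dverts i q by rewrite (conf_mem_dv (conf_sym Hc)) xq orbT.
  case: (cx Hc h1 h2) => hx.
    by move: (conf_i_notin Hc); rewrite -hx xp.
  by move: (conf_j_notin (conf_sym Hc)); rewrite -hx xq.
Qed.

Lemma cyc_dvp v : v \in dverts i p -> v \in cycle_nodes src tgt cyc.
Proof.
rewrite cyc_nodes /Defs.dverts in_cons => /orP[/eqP->|->//].
by rewrite (conf_i_in (conf_sym Hc)) orbT.
Qed.

Lemma cyc_dvq v : v \in dverts i q -> v \in cycle_nodes src tgt cyc.
Proof.
rewrite cyc_nodes (conf_mem_dv (conf_sym Hc)) => /orP[/eqP->|->]; last by rewrite orbT.
by rewrite (conf_j_in Hc).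
Qed.

Lemma cyc_edge_nodes e : (e \in p) || (e \in q) ->
  (osrc e \in cycle_nodes src tgt cyc) && (otgt e \in cycle_nodes src tgt cyc).
Proof.
case/orP => he.
  rewrite !cyc_dvp //; first by rewrite /Defs.dverts in_cons map_f ?orbT.
  exact: dwalk_src_mem (cwp Hc) he.
rewrite !cyc_dvq //; first by rewrite /Defs.dverts in_cons map_f ?orbT.
exact: dwalk_src_mem (cwq Hc) he.
Qed.

Lemma conf_cross a b : a \in p -> b \in q -> otgt a = otgt b -> otgt a = j.
Proof.
move=> ap bq hab.
have h1 : otgt a \in dverts i p by rewrite /Defs.dverts in_cons map_f ?orbT.
have h2 : otgt a \in dverts i q by rewrite hab /Defs.dverts in_cons map_f ?orbT.
case: (cx Hc h1 h2) => // hi.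
by move: (conf_i_notin Hc); rewrite -hi map_f.
Qed.

End Conf2.

Hypothesis Hcac : cactus src tgt.

Lemma label_uniq e i1 j1 p1 q1 i2 j2 p2 q2 :
  conf i1 j1 p1 q1 -> (e \in p1) || (e \in q1) ->
  conf i2 j2 p2 q2 -> (e \in p2) || (e \in q2) -> j1 = j2.
Proof.
move=> C1 e1 C2 e2.
have [heq|hne] := eqVneq (cycle_edges (cyc p1 q1)) (cycle_edges (cyc p2 q2)); last first.
  have := Hcac (cyc_ucycle C1) (cyc_ucycle C2) hne.
  have /andP[s1 t1] := cyc_edge_nodes C1 e1.
  have /andP[s2 t2] := cyc_edge_nodes C2 e2.
  have sub : [set osrc e; otgt e] \subset
             cycle_nodes src tgt (cyc p1 q1) :&: cycle_nodes src tgt (cyc p2 q2).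
    by apply/subsetP => x; rewrite in_set2 in_setI => /orP[]/eqP->; rewrite ?s1 ?s2 ?t1 ?t2.
  have := subset_leq_card sub; rewrite cards2 (Hdag e) => h1 h2.
  by have := leq_trans h1 h2.
have [a ap ha] : exists2 a, a \in p1 & otgt a = j1.
  by case/mapP: (conf_j_in C1) => a ap ->; exists a.
have [b bq hb] : exists2 b, b \in q1 & otgt b = j1.
  by case/mapP: (conf_j_in (conf_sym C1)) => b bq ->; exists b.
have hab : a != b by apply/eqP => hab; subst b; apply: (conf_edisj C1 ap bq).
have a2 : (a \in p2) || (a \in q2) by rewrite -cyc_edges -heq cyc_edges ap.
have b2 : (b \in p2) || (b \in q2) by rewrite -cyc_edges -heq cyc_edges bq orbT.
have eab : otgt a = otgt b by rewrite ha hb.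
case/orP: a2 => a2; case/orP: b2 => b2.
- by move: hab; rewrite (uniq_map_eq (conf_uotgt C2) a2 b2 eab) eqxx.
- by rewrite -ha (conf_cross C2 a2 b2 eab).
- by rewrite -ha eab (conf_cross C2 b2 a2 (esym eab)).
- by move: hab; rewrite (uniq_map_eq (conf_uotgt (conf_sym C2)) a2 b2 eab) eqxx.
Qed.

Lemma decPP (P : Prop) : Defs.decP P = true <-> P.
Proof. by rewrite /Defs.decP; case: excluded_middle_informative => h; split. Qed.

Lemma label_mem e j : j \in label src tgt o e ->
  exists i p q, conf i j p q /\ ((e \in p) || (e \in q)).
Proof.
rewrite inE => /decPP [i [p [q [hc he]]]]; exists i, p, q; split => //.
by case: he => ->; rewrite ?orbT.
Qed.

Lemma label_eq e j1 j2 : j1 \in label src tgt o e -> j2 \in label src tgt o e -> j1 = j2.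
Proof.
move=> /label_mem [i1 [p1 [q1 [C1 e1]]]] /label_mem [i2 [p2 [q2 [C2 e2]]]].
exact: label_uniq C1 e1 C2 e2.
Qed.

Lemma label_card e : #|label src tgt o e| <= 1.
Proof.
case: (set_0Vmem (label src tgt o e)) => [->|[j hj]]; first by rewrite cards0.
have : label src tgt o e \subset [set j].
  by apply/subsetP => x hx; rewrite inE (label_eq hx hj).
by move/subset_leq_card; rewrite cards1.
Qed.

Lemma bag_rel_label x y : bag_rel src tgt o x y -> label src tgt o x = label src tgt o y.
Proof.
case/andP => _ /pred0Pn [j /andP [jx jy]].
apply/setP => k; apply/idP/idP => hk.
  by rewrite (label_eq hk jx).
by rewrite (label_eq hk jy).
Qed.

Lemma bag_label_sub e : bag_label src tgt o e \subset label src tgt o e.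
Proof.
apply/bigcupsP => e'; rewrite inE => /connectP [s hp ->].
elim: s e hp => [|y s IH] x //= /andP[hxy hp].
by rewrite (bag_rel_label hxy); apply: IH.
Qed.

End Proof.

Theorem theorem33 (V E : finType) (src tgt : E -> V) :
  cactus src tgt ->
  forall (o : E -> bool) (s : V),
    extraction_order src tgt o s -> ew src tgt o <= 2.
Proof.
move=> Hcac o s [Hdag _].
have Hd : forall e, osrc src tgt o e != otgt src tgt o e.
  by move=> e; apply/eqP => h; move: (Hdag e); rewrite h connect0.
rewrite /ew ltnS; apply/bigmax_leqP => e _.
apply: leq_trans (subset_leq_card (bag_label_sub Hd Hcac e)) _.
exact: label_card Hd Hcac e.
Qed.
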